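(* Let $1\le k\le n$, let $\mathrm{St}(n,k)=\{Y\in\mathbb{R}^{n\times k}: Y^\top Y=I_k\}$ carry the metric $\langle V,W\rangle=2\operatorname{tr}(V^\top W)$ (the ''Euclidean metric''), fix $X\in \mathrm{St}(n,k)$, and let $\beta\colon I\to T_X\mathrm{St}(n,k)$ be a curve ($I$ an interval containing $0$). Let $u(t)=\big(\dot\beta(t)X^\top-X\dot\beta(t)^\top,\;X^\top\dot\beta(t)\big)\in\mathfrak p$. Let $S\colon I\to O(\mathfrak p)$, $q=(R,\theta)\colon I\to O(n)\times O(k)$ and $T\colon I\to O(N_X\mathrm{St}(n,k))$ be the solutions (assumed defined on $I$) of $$\dot S(t)=-\tfrac12\,\mathrm{pr}_{\mathfrak p}\circ \mathrm{ad}_{S(t)u(t)}\circ S(t),\quad S(0)=\mathrm{id}_{\mathfrak p},$$ $$(\dot R(t),\dot\theta(t))=(R(t)\xi_1(t),\theta(t)\xi_2(t)),\quad (R(0),\theta(0))=(I_n,I_k),\quad\text{where }(\xi_1(t),\xi_2(t)):=S(t)u(t),$$ $$\dot T(t)=-P_X^\perp\circ f_{(\xi_1(t),\xi_2(t))}\circ T(t),\quad T(0)=\mathrm{id}_{N_X\mathrm{St}(n,k)}.$$ Define $\widehat\beta(t)=R(t)X\theta(t)^\top$, define $B(t)\colon T_X\mathrm{St}(n,k)\to T_{\widehat\beta(t)}\mathrm{St}(n,k)$ by $B(t)V=R(t)(\eta_1X-X\eta_2)\theta(t)^\top$ where $(\eta_1,\eta_2)=S(t)\big(VX^\top-XV^\top,\,X^\top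 V\big)$, and define $C(t)\colon N_X\mathrm{St}(n,k)\to N_{\widehat\beta(t)}\mathrm{St}(n,k)$ by $C(t)W=R(t)\,(T(t)W)\,\theta(t)^\top$. Then $(\beta(t),\widehat\beta(t),B(t),C(t))$ is an extrinsic rolling of $T_X\mathrm{St}(n,k)$ over $\mathrm{St}(n,k)$ with respect to the Euclidean metric.
   Context: $O(n)\times O(k)$ acts on $\mathbb{R}^{n\times k}$ by $\Phi_{(R,\theta)}(V)=RV\theta^\top$. Its Lie algebra $\mathfrak g=\mathfrak{so}(n)\times\mathfrak{so}(k)$ carries the $\mathrm{Ad}$-invariant scalar product $\langle(\Omega_1,\Psi_1),(\Omega_2,\Psi_2)\rangle=-\operatorname{tr}(\Omega_1\Omega_2)+2\operatorname{tr}(\Psi_1\Psi_2)$; $\mathfrak h=\{(\Omega,\eta)\in\mathfrak g:\Omega X=X\eta\}$ is the Lie algebra of the stabilizer $H$ of $X$, $\mathfrak p=\mathfrak h^\perp$, and $\mathrm{pr}_{\mathfrak p}\colon\mathfrak g\to\mathfrak p$ (projection along $\mathfrak h$) is $\mathrm{pr}_{\mathfrak p}(\Omega,\eta)=(XX^\top\Omega+\Omega XX^\top-2X\eta X^\top,\;X^\top\Omega X-\eta)$. $\mathrm{ad}_Y Z=[Y,Z]$ (componentwise commutator) and $O(\mathfrak p)$ is the group of linear maps of $\mathfrak p$ preserving $\langle\cdot,\cdot\rangle$. $T_Y\mathrm{St}(n,k)=\{V: Y^\top V+V^\top Y=0\}$, $N_Y\mathrm{St}(n,k)$ is its orthogonal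 complement in $\mathbb{R}^{n\times k}$ for the Frobenius product, $P_Y^\perp(V)=\tfrac12 Y(Y^\top V+V^\top Y)$ is the orthogonal projection onto $N_Y\mathrm{St}(n,k)$, and $f_{(\xi_1,\xi_2)}(V)=\xi_1V-V\xi_2$. The linear subspace $T_X\mathrm{St}(n,k)\subset\mathbb{R}^{n\times k}$ is viewed as a submanifold with tangent space $T_X\mathrm{St}(n,k)$ and normal space $N_X\mathrm{St}(n,k)$ at every point. An extrinsic rolling of a submanifold $M$ over a submanifold $\widehat M$ of equal dimension (both isometrically embedded in the same pseudo-Euclidean space) is a quadruple $(\alpha,\widehat\alpha,A,C)$ of curves $\alpha$ in $M$, $\widehat\alpha$ in $\widehat M$ and linear isometries $A(t)\colon T_{\alpha(t)}M\to T_{\widehat\alpha(t)}\widehat M$, $C(t)\colon N_{\alpha(t)}M\to N_{\widehat\alpha(t)}\widehat M$ such that: $\dot{\widehat\alpha}(t)=A(t)\dot\alpha(t)$; $A(t)Z(t)$ is parallel (Levi-Civita) along $\widehat\alpha$ iff $Z$ is parallel along $\alpha$; and $C(t)Z(t)$ is normal parallel along $\widehat\alpha$ iff $Z$ is normal parallel along $\alpha$, where a normal vector field $Z$ along a curve $c$ is normal parallel if the normal component of $\tfrac{d}{dt}Z(t)$ vanishes. On $T_X\mathrm{St}(n,k)$ parallel (tangent or normal) fields along curves are the constant ones. *)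

(* Defs.v *)
From HB Require Import structures.
From mathcomp Require Import all_boot all_order all_algebra.
From mathcomp Require Import all_classical all_reals all_analysis.
Set Implicit Arguments. Unset Strict Implicit. Unset Printing Implicit Defensive.
Import Order.TTheory GRing.Theory Num.Theory numFieldNormedType.Exports.
Local Open Scope classical_set_scope.
Local Open Scope ring_scope.

Section StiefelRolling.
Variable R : realType.

(** ** Derivatives of curves, relative to a (possibly closed/half-open)
    interval [I]: at endpoints this is the one-sided derivative. *)
Definition has_deriv_in (I : set R) (f : R -> R) (t d : R) : Prop :=
  (fun h : R => h^-1 * (f (t + h) - f t)) @ within (fun h => I (t + h)) (0 : R)^' --> (d : R).

Definition mx_deriv_in m p (I : set R) (F : R -> 'M[R]_(m, p)) (t : R)
  (D : 'M[R]_(m, p)) : Prop :=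
  forall i j, has_deriv_in I (fun s => F s i j) t (D i j).

Definition eucl m p (V W : 'M[R]_(m, p)) : R := 2 * \tr (V^T *m W).

Definition Stiefel n k : set 'M[R]_(n, k) := [set Y | Y^T *m Y = 1%:M].

Definition TSt n k (Y : 'M[R]_(n, k)) : set 'M[R]_(n, k) :=
  [set V | Y^T *m V + V^T *m Y = 0].

Definition NSt n k (Y : 'M[R]_(n, k)) : set 'M[R]_(n, k) :=
  [set W | forall V, TSt Y V -> eucl V W = 0].

Definition Pperp n k (Y V : 'M[R]_(n, k)) : 'M[R]_(n, k) :=
  2^-1 *: (Y *m (Y^T *m V + V^T *m Y)).

Definition orthmx n (Q : 'M[R]_n) : Prop := Q^T *m Q = 1%:M.

Definition gT n k := ('M[R]_n * 'M[R]_k)%type.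

Definition gadd n k (x y : gT n k) : gT n k := (x.1 + y.1, x.2 + y.2).
Definition gscale n k (a : R) (x : gT n k) : gT n k := (a *: x.1, a *: x.2).

Definition skew m (A : 'M[R]_m) : Prop := A^T = - A.

Definition g_sub n k : set (gT n k) := [set x | skew x.1 /\ skew x.2].

Definition ginner n k (x y : gT n k) : R :=
  - \tr (x.1 *m y.1) + 2 * \tr (x.2 *m y.2).

(* Lie algebra of the stabilizer H of X *)
Definition h_sub n k (X : 'M[R]_(n, k)) : set (gT n k) :=
  [set x | g_sub x /\ x.1 *m X = X *m x.2].

Definition p_sub n k (X : 'M[R]_(n, k)) : set (gT n k) :=
  [set x | g_sub x /\ forall y, h_sub X y -> ginner x y = 0].

Definition prp n k (X : 'M[R]_(n, k)) (x : gT n k) : gT n k :=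
  (X *m X^T *m x.1 + x.1 *m X *m X^T - 2%:R *: (X *m x.2 *m X^T),
   X^T *m x.1 *m X - x.2).

Definition gad n k (y z : gT n k) : gT n k :=
  (y.1 *m z.1 - z.1 *m y.1, y.2 *m z.2 - z.2 *m y.2).

Definition fxi n k (xi : gT n k) (V : 'M[R]_(n, k)) : 'M[R]_(n, k) :=
  xi.1 *m V - V *m xi.2.

Definition pvec n k (X V : 'M[R]_(n, k)) : gT n k :=
  (V *m X^T - X *m V^T, X^T *m V).

Definition g_deriv_in n k (I : set R) (F : R -> gT n k) (t : R) (D : gT n k)
  : Prop :=
  mx_deriv_in I (fun s => (F s).1) t D.1 /\ mx_deriv_in I (fun s => (F s).2) t D.2.

Definition Op n k (X : 'M[R]_(n, k)) (L : gT n k -> gT n k) : Prop :=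
  [/\ (forall x, p_sub X x -> p_sub X (L x)),
      (forall a x y, p_sub X x -> p_sub X y ->
        L (gadd (gscale a x) y) = gadd (gscale a (L x)) (L y))
    & forall x y, p_sub X x -> p_sub X y -> ginner (L x) (L y) = ginner x y].

Definition lin_isom n k (U W : set 'M[R]_(n, k)) (L : 'M[R]_(n, k) -> 'M[R]_(n, k))
  : Prop :=
  [/\ (forall v, U v -> W (L v)),
      (forall a v w, U v -> U w -> L (a *: v + w) = a *: L v + L w)
    & forall v w, U v -> U w -> eucl (L v) (L w) = eucl v w].

(** ** Extrinsic rolling.  A submanifold is given by its point set together
    with its families of tangent and normal spaces. *)

(* Z is (Levi-Civita) parallel along c: Z tangent, differentiable, and the
   tangential component of dZ/dt vanishes, i.e. dZ/dt is normal. *)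
Definition tparallel n k (I : set R) (TM NM : 'M[R]_(n, k) -> set 'M[R]_(n, k))
  (c Z : R -> 'M[R]_(n, k)) : Prop :=
  (forall t, I t -> TM (c t) (Z t)) /\
  exists D : R -> 'M[R]_(n, k),
    (forall t, I t -> mx_deriv_in I Z t (D t)) /\ (forall t, I t -> NM (c t) (D t)).

(* Z is normal parallel along c: Z normal, differentiable, and the normal
   component of dZ/dt vanishes, i.e. dZ/dt is tangent. *)
Definition nparallel n k (I : set R) (TM NM : 'M[R]_(n, k) -> set 'M[R]_(n, k))
  (c Z : R -> 'M[R]_(n, k)) : Prop :=
  (forall t, I t -> NM (c t) (Z t)) /\
  exists D : R -> 'M[R]_(n, k),
    (forall t, I t -> mx_deriv_in I Z t (D t)) /\ (forall t, I t -> TM (c t) (D t)).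

Definition mx_differentiable_in n k (I : set R) (Z : R -> 'M[R]_(n, k)) : Prop :=
  exists D : R -> 'M[R]_(n, k), forall t, I t -> mx_deriv_in I Z t (D t).

Definition extrinsic_rolling n k (I : set R)
  (M : set 'M[R]_(n, k)) (TM NM : 'M[R]_(n, k) -> set 'M[R]_(n, k))
  (Mh : set 'M[R]_(n, k)) (TMh NMh : 'M[R]_(n, k) -> set 'M[R]_(n, k))
  (alpha alphah : R -> 'M[R]_(n, k))
  (A C : R -> 'M[R]_(n, k) -> 'M[R]_(n, k)) : Prop :=
  [/\ (forall t, I t -> M (alpha t) /\ Mh (alphah t)) /\
      (forall t, I t -> lin_isom (TM (alpha t)) (TMh (alphah t)) (A t)) /\
      (forall t, I t -> lin_isom (NM (alpha t)) (NMh (alphah t)) (C t)),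
      (exists Da Dah : R -> 'M[R]_(n, k),
        [/\ (forall t, I t -> mx_deriv_in I alpha t (Da t)),
            (forall t, I t -> mx_deriv_in I alphah t (Dah t))
          & forall t, I t -> Dah t = A t (Da t)]),
      (forall Z : R -> 'M[R]_(n, k),
        (forall t, I t -> TM (alpha t) (Z t)) -> mx_differentiable_in I Z ->
        (tparallel I TMh NMh alphah (fun t => A t (Z t)) <->
         tparallel I TM NM alpha Z))
    & (forall Z : R -> 'M[R]_(n, k),
        (forall t, I t -> NM (alpha t) (Z t)) -> mx_differentiable_in I Z ->
        (nparallel I TMh NMh alphah (fun t => C t (Z t)) <->
         nparallel I TM NM alpha Z))].

End StiefelRolling.

(* Main.v *)
Require Import Defs.
From HB Require Import structures.
From mathcomp Require Import all_boot all_order all_algebra.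
From mathcomp Require Import all_classical all_reals all_analysis.
From mathcomp Require Import ring lra.
Import Order.TTheory GRing.Theory Num.Theory numFieldNormedType.Exports.
Local Open Scope classical_set_scope.
Local Open Scope ring_scope.
Set Implicit Arguments. Unset Strict Implicit. Unset Printing Implicit Defensive.

Section Deriv.
Variable R : realType.
Variable I : set R.
Definition Fw (t : R) : set_system R := within (fun h : R => I (t + h)) (0:R)^'.

Lemma deg_cvg t (g : R -> R) (l : R) : Fw t set0 -> g @ Fw t --> l.
Proof. by move=> H A _; apply: filterS H. Qed.

Lemma nondeg_uniq t (g : R -> R) (l1 l2 : R) : ~ Fw t set0 ->
  g @ Fw t --> l1 -> g @ Fw t --> l2 -> l1 = l2.
Proof.
move=> H h1 h2.
have PF : ProperFilter (Fw t) by constructor; [exact: H | exact: within_filter].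
exact: (norm_cvg_unique (F := g @ Fw t)) h1 h2.
Qed.

Lemma near_I t : \forall h \near Fw t, I (t + h).
Proof. exact: near_withinT. Qed.

Lemma near_nz t : \forall h \near Fw t, h != 0.
Proof.
have H : (0:R)^' (fun h : R => h != 0) by exact: (nbhs_dnbhs_neq (0:R)).
exact: (@cvg_within R (0:R)^' _ (fun h => I (t + h)) _ H).
Qed.

Lemma id_to0 t : (fun h => h) @ Fw t --> (0:R).
Proof.
apply: cvg_trans (cvg_within (F := (0:R)^') _) _.
exact: cvg_within.
Qed.


Lemma Dcst t (c : R) : has_deriv_in I (fun _ => c) t 0.
Proof.
rewrite /has_deriv_in.
have -> : (fun h : R => h^-1 * (c - c)) = (fun _ => 0) by apply: funext => h; rewrite subrr mulr0.
exact: cvg_cst.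
Qed.

Lemma Dadd t f g df dg : has_deriv_in I f t df -> has_deriv_in I g t dg ->
  has_deriv_in I (fun s => f s + g s) t (df + dg).
Proof.
rewrite /has_deriv_in => hf hg.
have -> : (fun h : R => h^-1 * (f (t + h) + g (t + h) - (f t + g t))) =
  (fun h => h^-1 * (f (t + h) - f t) + h^-1 * (g (t + h) - g t)).
  by apply: funext => h; ring.
exact: cvgD.
Qed.

Lemma Dscale t (c : R) f df : has_deriv_in I f t df ->
  has_deriv_in I (fun s => c * f s) t (c * df).
Proof.
rewrite /has_deriv_in => hf.
have -> : (fun h : R => h^-1 * (c * f (t + h) - c * f t)) =
  (fun h => c * (h^-1 * (f (t + h) - f t))).
  by apply: funext => h; ring.
exact: cvgMr.
Qed.

Lemma Dcont t g dg : has_deriv_in I g t dg -> (fun h => g (t + h)) @ Fw t --> g t.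
Proof.
rewrite /has_deriv_in => hg.
have H1 : (fun h => g t + h * (h^-1 * (g (t + h) - g t))) @ Fw t --> g t + 0 * dg.
  apply: cvgD; first exact: cvg_cst.
  apply: cvgM; [exact: id_to0 | exact: hg].
rewrite mul0r addr0 in H1.
apply: cvg_trans H1; apply: near_eq_cvg.
near=> h.
have hnz : h != 0 by near: h; exact: near_nz.
by rewrite mulrA mulfV // mul1r addrC subrK.
Unshelve. all: by end_near.
Qed.

Lemma Dmul t f g df dg : has_deriv_in I f t df -> has_deriv_in I g t dg ->
  has_deriv_in I (fun s => f s * g s) t (df * g t + f t * dg).
Proof.
move=> hf hg; have hc := Dcont hg.
rewrite /has_deriv_in in hf hg *.
have -> : (fun h : R => h^-1 * (f (t + h) * g (t + h) - f t * g t)) =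
  (fun h => (h^-1 * (f (t + h) - f t)) * g (t + h) + f t * (h^-1 * (g (t + h) - g t))).
  by apply: funext => h; ring.
apply: cvgD; first exact: cvgM.
exact: cvgMr.
Qed.

Lemma Dsum (J : Type) (r : seq J) t (f : J -> R -> R) (df : J -> R) :
  (forall j, has_deriv_in I (f j) t (df j)) ->
  has_deriv_in I (fun s => \sum_(j <- r) f j s) t (\sum_(j <- r) df j).
Proof.
move=> h; elim: r => [|a r IH].
  under eq_fun do rewrite big_nil. rewrite big_nil; exact: Dcst.
under eq_fun do rewrite big_cons. rewrite big_cons; exact: (Dadd (h a) IH).
Qed.

Lemma Dloc t f g d : I t -> (forall s, I s -> f s = g s) ->
  has_deriv_in I f t d -> has_deriv_in I g t d.
Proof.
rewrite /has_deriv_in => It efg hf.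
apply: cvg_trans hf; apply: near_eq_cvg.
near=> h.
have Ih : I (t + h) by near: h; exact: near_I.
by rewrite !efg.
Unshelve. all: by end_near.
Qed.

Lemma Duniq t f d1 d2 : ~ Fw t set0 -> has_deriv_in I f t d1 -> has_deriv_in I f t d2 -> d1 = d2.
Proof. move=> H; exact: nondeg_uniq. Qed.

Lemma Ddeg t f d : Fw t set0 -> has_deriv_in I f t d.
Proof. move=> H; exact: deg_cvg. Qed.

Lemma Dzero t f d : I t -> ~ Fw t set0 -> (forall s, I s -> f s = 0) ->
  has_deriv_in I f t d -> d = 0.
Proof.
move=> It H h0 hf; apply: (Duniq H hf).
apply: (Dloc It (f := fun _ => 0)); last exact: Dcst.
by move=> s Is; rewrite h0.
Qed.

End Deriv.

Section MDeriv.
Variable R : realType.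
Variable I : set R.
Variables m p q : nat.
Implicit Types (F G : R -> 'M[R]_(m, p)).

Lemma Dext (f g : R -> R) t d : (forall s, f s = g s) -> has_deriv_in I f t d -> has_deriv_in I g t d.
Proof. by move=> e; have -> : f = g by apply: funext. Qed.

Lemma MDadd t F G DF DG : mx_deriv_in I F t DF -> mx_deriv_in I G t DG ->
  mx_deriv_in I (fun s => F s + G s) t (DF + DG).
Proof.
move=> hF hG i j; rewrite mxE; apply: (Dext (f := fun s => F s i j + G s i j)).
  by move=> s; rewrite mxE.
exact: Dadd.
Qed.

Lemma MDscale t (c : R) F DF : mx_deriv_in I F t DF ->
  mx_deriv_in I (fun s => c *: F s) t (c *: DF).
Proof.
move=> hF i j; rewrite mxE; apply: (Dext (f := fun s => c * F s i j)).
  by move=> s; rewrite mxE.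
exact: Dscale.
Qed.

Lemma MDopp t F DF : mx_deriv_in I F t DF -> mx_deriv_in I (fun s => - F s) t (- DF).
Proof.
move=> hF; rewrite -scaleN1r.
have -> : (fun s => - F s) = (fun s => (-1) *: F s) by apply: funext => s; rewrite scaleN1r.
exact: MDscale.
Qed.

Lemma MDsub t F G DF DG : mx_deriv_in I F t DF -> mx_deriv_in I G t DG ->
  mx_deriv_in I (fun s => F s - G s) t (DF - DG).
Proof. by move=> hF hG; apply: MDadd => //; apply: MDopp. Qed.

Lemma MDcst t (A : 'M[R]_(m, p)) : mx_deriv_in I (fun _ => A) t 0.
Proof. by move=> i j; rewrite mxE; exact: Dcst. Qed.

Lemma MDtr t F DF : mx_deriv_in I F t DF -> mx_deriv_in I (fun s => (F s)^T) t DF^T.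
Proof.
move=> hF i j; rewrite mxE; apply: (Dext (f := fun s => F s j i)).
  by move=> s; rewrite mxE.
exact: hF.
Qed.

Lemma MDmul t F (G : R -> 'M[R]_(p, q)) DF DG : mx_deriv_in I F t DF -> mx_deriv_in I G t DG ->
  mx_deriv_in I (fun s => F s *m G s) t (DF *m G t + F t *m DG).
Proof.
move=> hF hG i j.
rewrite !mxE -big_split /=.
apply: (Dext (f := fun s => \sum_(l < p) F s i l * G s l j)).
  by move=> s; rewrite mxE.
apply: Dsum => l; exact: Dmul.
Qed.

Lemma MDext t F G D : (forall s, F s = G s) -> mx_deriv_in I F t D -> mx_deriv_in I G t D.
Proof. by move=> e; have -> : F = G by apply: funext. Qed.

Lemma MDloc t F G D : I t -> (forall s, I s -> F s = G s) ->
  mx_deriv_in I F t D -> mx_deriv_in I G t D.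
Proof. by move=> It e hF i j; apply: (Dloc It _ (hF i j)) => s Is; rewrite e. Qed.

Lemma MDdeg t F D : Fw I t set0 -> mx_deriv_in I F t D.
Proof. by move=> H i j; exact: Ddeg. Qed.

Lemma MDuniq t F D1 D2 : ~ Fw I t set0 -> mx_deriv_in I F t D1 -> mx_deriv_in I F t D2 -> D1 = D2.
Proof. by move=> H h1 h2; apply/matrixP => i j; exact: (Duniq H (h1 i j) (h2 i j)). Qed.

Lemma MDzero t F D : I t -> ~ Fw I t set0 -> (forall s, I s -> F s = 0) ->
  mx_deriv_in I F t D -> D = 0.
Proof.
move=> It H h0 hF; apply/matrixP => i j; rewrite mxE.
by apply: (Dzero It H _ (hF i j)) => s Is; rewrite h0 // mxE.
Qed.

End MDeriv.

Ltac lincomb := apply/matrixP => ? ?; rewrite !mxE; field; try done.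
Lemma trD (R : realType) m p (A B : 'M[R]_(m, p)) : (A + B)^T = A^T + B^T.
Proof. by apply/matrixP => i j; rewrite !mxE. Qed.
Lemma trB (R : realType) m p (A B : 'M[R]_(m, p)) : (A - B)^T = A^T - B^T.
Proof. by apply/matrixP => i j; rewrite !mxE. Qed.
Lemma trN (R : realType) m p (A : 'M[R]_(m, p)) : (- A)^T = - A^T.
Proof. by apply/matrixP => i j; rewrite !mxE. Qed.
Lemma trZ (R : realType) m p a (A : 'M[R]_(m, p)) : (a *: A)^T = a *: A^T.
Proof. by apply/matrixP => i j; rewrite !mxE. Qed.
Lemma trcB (R : realType) m (A B : 'M[R]_m) : \tr (A - B) = \tr A - \tr B.
Proof. by rewrite /mxtrace -sumrB; apply: eq_bigr => i _; rewrite !mxE. Qed.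
Lemma trcN (R : realType) m (A : 'M[R]_m) : \tr (- A) = - \tr A.
Proof. by rewrite /mxtrace -sumrN; apply: eq_bigr => i _; rewrite !mxE. Qed.
Ltac trnorm := repeat progress rewrite ?trD ?trB ?trN ?trZ ?trmx_mul ?trmxK.
Ltac mxnorm := repeat progress rewrite ?mulmxDl ?mulmxDr ?mulmxBl ?mulmxBr ?mulmxN ?mulNmx
   -?mulmxA -?scalemxAl -?scalemxAr ?mulmx1 ?mul1mx ?mulmx0 ?mul0mx.

Definition PT (R : realType) n k (X V : 'M[R]_(n, k)) := V - Pperp X V.
Definition Phi (R : realType) n k (X : 'M[R]_(n, k)) (x : gT R n k) := x.1 *m X - X *m x.2.

Lemma tr_pos (R : realType) m p (A : 'M[R]_(m, p)) : \tr (A^T *m A) = 0 -> A = 0.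
Proof.
rewrite /mxtrace.
under eq_bigr do rewrite mxE.
move=> h2; apply/matrixP => j i; rewrite mxE.
have H := psumr_eq0P _ h2.
have h3 : \sum_(l < m) A^T i l * A l i = 0.
  apply: H => // i' _.
  apply: sumr_ge0 => l _; rewrite mxE; by rewrite -expr2 sqr_ge0.
have H' := psumr_eq0P _ h3.
have h4 : A^T i j * A j i = 0.
  apply: H' => // l _.
  rewrite mxE; by rewrite -expr2 sqr_ge0.
by move: h4; rewrite mxE => /eqP; rewrite mulf_eq0 orbb => /eqP.
Qed.

Section Alg.
Variable R : realType.
Variables n k : nat.
Variable X : 'M[R]_(n, k).
Hypothesis XtX : X^T *m X = 1%:M.

Lemma XtXr m (b : 'M[R]_(k, m)) : X^T *m (X *m b) = b.
Proof. by rewrite mulmxA XtX mul1mx. Qed.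

Lemma Tswap (V : 'M[R]_(n, k)) : TSt X V -> V^T *m X = - (X^T *m V).
Proof. by rewrite /TSt /= => /eqP; rewrite addr_eq0 => /eqP ->; rewrite opprK. Qed.

Lemma Tswap_r (V : 'M[R]_(n, k)) m (b : 'M[R]_(k, m)) : TSt X V -> V^T *m (X *m b) = - (X^T *m (V *m b)).
Proof. by move=> h; rewrite mulmxA (Tswap h) mulNmx mulmxA. Qed.

Lemma PT_T V : TSt X (PT X V).
Proof.
rewrite /TSt /PT /Pperp /=.
trnorm. mxnorm. rewrite ?XtXr ?XtX ?mulmx1.
lincomb.
Qed.


Lemma eucl_sym (V W : 'M[R]_(n, k)) : eucl V W = eucl W V.
Proof. by rewrite /eucl -mxtrace_tr trmx_mul trmxK. Qed.

Lemma eucl_linr a (V W1 W2 : 'M[R]_(n, k)) : eucl V (a *: W1 + W2) = a * eucl V W1 + eucl V W2.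
Proof. rewrite /eucl mulmxDr -scalemxAr mxtraceD mxtraceZ; ring. Qed.

Lemma eucl_pos (A : 'M[R]_(n, k)) : eucl A A = 0 -> A = 0.
Proof.
rewrite /eucl => h.
have h2 : \tr (A^T *m A) = 0 by move: h; lra.
move: h2; rewrite /mxtrace.
under eq_bigr do rewrite mxE.
move=> h2; apply/matrixP => j i; rewrite mxE.
have H := psumr_eq0P _ h2.
have h3 : \sum_(l < n) A^T i l * A l i = 0.
  apply: H => // i' _.
  apply: sumr_ge0 => l _; rewrite mxE; by rewrite -expr2 sqr_ge0.
have H' := psumr_eq0P _ h3.
have h4 : A^T i j * A j i = 0.
  apply: H' => // l _.
  rewrite mxE; by rewrite -expr2 sqr_ge0.
by move: h4; rewrite mxE => /eqP; rewrite mulf_eq0 orbb => /eqP.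
Qed.

Lemma TN0 (Y A : 'M[R]_(n, k)) : TSt Y A -> NSt Y A -> A = 0.
Proof. by move=> hT hN; apply: eucl_pos; apply: hN. Qed.

Lemma NSt_lin (Y : 'M[R]_(n, k)) a W1 W2 : NSt Y W1 -> NSt Y W2 -> NSt Y (a *: W1 + W2).
Proof. by move=> h1 h2 V hV; rewrite eucl_linr h1 // h2 // mulr0 addr0. Qed.

Lemma NSt_sub (Y : 'M[R]_(n, k)) W1 W2 : NSt Y W1 -> NSt Y W2 -> NSt Y (W1 - W2).
Proof.
move=> h1 h2; have -> : W1 - W2 = (-1) *: W2 + W1 by rewrite scaleN1r addrC.
exact: NSt_lin.
Qed.

Lemma NX (M : 'M[R]_k) : M^T = M -> NSt X (X *m M).
Proof.
move=> hM U hU; rewrite /eucl mulmxA.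
set P := U^T *m X.
have hP : P^T = - P by rewrite /P trmx_mul trmxK (Tswap hU) opprK.
have e : \tr (P *m M) = - \tr (P *m M).
  by rewrite -{1}mxtrace_tr trmx_mul hM hP mulmxN linearN /= mxtrace_mulC.
lra.
Qed.

Lemma Pperp_N V : NSt X (Pperp X V).
Proof.
rewrite /Pperp scalemxAr; apply: NX.
by trnorm; rewrite addrC.
Qed.

Lemma T_Pperp V : TSt X V -> Pperp X V = 0.
Proof. by rewrite /Pperp /TSt /= => ->; rewrite mulmx0 scaler0. Qed.

Lemma T_PT V : TSt X V -> PT X V = V.
Proof. by move=> h; rewrite /PT T_Pperp // subr0. Qed.

Lemma N_PT W : NSt X W -> PT X W = 0.
Proof. by move=> h; apply: (TN0 (PT_T W)); apply: NSt_sub => //; exact: Pperp_N. Qed.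

Lemma N_Pperp W : NSt X W -> Pperp X W = W.
Proof. by move=> /N_PT; rewrite /PT => /eqP; rewrite subr_eq0 => /eqP. Qed.

Lemma PT_Pperp V : PT X V + Pperp X V = V.
Proof. by rewrite /PT subrK. Qed.


Lemma gsub_pvec V : TSt X V -> g_sub (pvec X V).
Proof.
move=> hV; split; rewrite /Defs.skew /pvec /=.
  by trnorm; rewrite opprB.
by rewrite trmx_mul trmxK (Tswap hV).
Qed.

Lemma h_skew2 (y : gT R n k) : g_sub y -> y.1 *m X = X *m y.2 -> X^T *m y.1 = y.2 *m X^T.
Proof.
case=> h1 h2 e.
have := congr1 trmx e; rewrite !trmx_mul h1 h2 mulmxN mulNmx => /eqP.
by rewrite eqr_opp => /eqP.
Qed.

Lemma p_pvec_in V : TSt X V -> p_sub X (pvec X V).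
Proof.
move=> hV; split; first exact: gsub_pvec.
move=> y [hy e]; rewrite /ginner /pvec /=.
have e1 : \tr (V *m X^T *m y.1) = \tr (X^T *m V *m y.2).
  by rewrite -[in LHS]mulmxA (h_skew2 hy e) [in LHS]mulmxA [in LHS]mxtrace_mulC mulmxA.
have e2 : \tr (X *m V^T *m y.1) = - \tr (X^T *m V *m y.2).
  rewrite -[in LHS]mulmxA [in LHS]mxtrace_mulC -[in LHS]mulmxA e [in LHS]mulmxA (Tswap hV) mulNmx.
  by rewrite linearN.
rewrite mulmxBl trcB e1 e2; ring.
Qed.

Lemma Phi_T (x : gT R n k) : g_sub x -> TSt X (Phi X x).
Proof.
case=> h1 h2; rewrite /TSt /Phi /=.
trnorm; rewrite h1 h2; mxnorm; rewrite ?XtXr ?XtX ?mulmx1.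
lincomb.
Qed.

Lemma Phi_pvec V : TSt X V -> Phi X (pvec X V) = V.
Proof.
move=> hV; rewrite /Phi /pvec /=.
mxnorm; rewrite ?XtXr ?XtX ?mulmx1 (Tswap hV).
mxnorm; lincomb.
Qed.

Lemma Phi_lin a (x y : gT R n k) : Phi X (gadd (gscale a x) y) = a *: Phi X x + Phi X y.
Proof. rewrite /Phi /gadd /gscale /=; mxnorm; lincomb. Qed.

Lemma Phi_scale a (x : gT R n k) : Phi X (gscale a x) = a *: Phi X x.
Proof. rewrite /Phi /gscale /=; mxnorm; lincomb. Qed.

Lemma pvec_lin a V W : pvec X (a *: V + W) = gadd (gscale a (pvec X V)) (pvec X W).
Proof. rewrite /pvec /gadd /gscale /=; congr pair; trnorm; mxnorm; lincomb. Qed.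

Lemma Phi_prp (x : gT R n k) : Phi X (prp X x) = Phi X x.
Proof.
rewrite /Phi /prp /=.
mxnorm; rewrite ?XtXr ?XtX ?mulmx1.
lincomb.
Qed.

Lemma gad_lin (xi : gT R n k) a x y :
  gad xi (gadd (gscale a x) y) = gadd (gscale a (gad xi x)) (gad xi y).
Proof. rewrite /gad /gadd /gscale /=; congr pair; mxnorm; lincomb. Qed.


Lemma eucl_ginner V W : TSt X V -> TSt X W -> ginner (pvec X V) (pvec X W) = eucl V W.
Proof.
move=> hV hW; rewrite /ginner /pvec /eucl /=.
rewrite mulmxBl !mulmxBr !trcB.
have a : \tr (V *m X^T *m (W *m X^T)) = \tr (X^T *m V *m (X^T *m W)).
  by rewrite !mulmxA mxtrace_mulC !mulmxA.
have b : \tr (V *m X^T *m (X *m W^T)) = \tr (V^T *m W).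
  by rewrite -mulmxA XtXr -mxtrace_tr trmx_mul trmxK mxtrace_mulC.
have c : \tr (X *m V^T *m (W *m X^T)) = \tr (V^T *m W).
  by rewrite !mulmxA mxtrace_mulC !mulmxA XtX mul1mx.
have d : \tr (X *m V^T *m (X *m W^T)) = \tr (X^T *m V *m (X^T *m W)).
  rewrite !mulmxA mxtrace_mulC !mulmxA (Tswap hW) -(mulmxA _ V^T X) (Tswap hV).
  by rewrite mulNmx mulmxN opprK [LHS]mxtrace_mulC !mulmxA.
rewrite a b c d; ring.
Qed.

Lemma ginner_subl (x w y : gT R n k) :
  ginner (x.1 - w.1, x.2 - w.2) y = ginner x y - ginner w y.
Proof. rewrite /ginner /= !mulmxBl !trcB; ring. Qed.

Lemma h_aux (y : gT R n k) : y.1^T = - y.1 -> y.2^T = - y.2 -> y.1 *m X = X *m y.2 ->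
  h_sub X (y.1 - 2 *: (X *m y.2 *m X^T), - y.2) /\
  ginner y (y.1 - 2 *: (X *m y.2 *m X^T), - y.2) = \tr (y.1^T *m y.1).
Proof.
case: y => y1 y2 /= hy1 hy2 hyX; split.
  split; first split; rewrite /Defs.skew /=.
  - by trnorm; rewrite hy1 hy2; mxnorm; lincomb.
  - apply/matrixP => i j; have := congr1 (fun M : 'M[R]_k => M j i) hy2.
    rewrite !mxE => H; lra.
  - rewrite mulmxBl hyX; mxnorm; rewrite ?XtX ?mulmx1; lincomb.
rewrite /ginner /= hy1 mulmxBr mulNmx trcB trcN -scalemxAr mxtraceZ.
have -> : \tr (y1 *m (X *m y2 *m X^T)) = \tr (y2 *m y2).
  by rewrite mulmxA mxtrace_mulC (mulmxA y1) hyX !mulmxA XtX mul1mx.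
rewrite mulmxN trcN; ring.
Qed.

Lemma p_pvec (x : gT R n k) : p_sub X x -> x = pvec X (Phi X x).
Proof.
move=> [[h1 h2] hp].
have hV : TSt X (Phi X x) by apply: Phi_T.
set V := Phi X x in hV *.
have [[w1 w2] hwp] := p_pvec_in hV.
have EV : Phi X (pvec X V) = V by apply: Phi_pvec.
set w := pvec X V in w1 w2 hwp EV *.
set y : gT R n k := (x.1 - w.1, x.2 - w.2).
rewrite /Defs.skew in h1 h2 w1 w2.
have hy1 : y.1^T = - y.1 by rewrite /= trB h1 w1; lincomb.
have hy2 : y.2^T = - y.2 by rewrite /= trB h2 w2; lincomb.
have hyX : y.1 *m X = X *m y.2.
  have EV' : w.1 *m X - X *m w.2 = x.1 *m X - X *m x.2 by exact: EV.
  rewrite /= mulmxBl mulmxBr.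
  apply/matrixP => i j; have := congr1 (fun M : 'M[R]_(n, k) => M i j) EV'; rewrite !mxE => E'.
  lra.
have [hy' e1] := h_aux hy1 hy2 hyX.
set y' : gT R n k := (y.1 - 2 *: (X *m y.2 *m X^T), - y.2) in hy' e1.
have e0 : ginner y y' = 0.
  rewrite /y ginner_subl.
  have -> : ginner x y' = 0 by rewrite (hp y' hy').
  by rewrite (hwp y' hy') subr0.
have y10 : y.1 = 0 by apply: tr_pos; rewrite -e1 e0.
have y20 : y.2 = 0.
  by rewrite -[y.2]mul1mx -XtX -mulmxA -hyX y10 mul0mx mulmx0.
apply: injective_projections; apply/eqP; rewrite -subr_eq0; apply/eqP.
  exact: y10.
exact: y20.
Qed.


Lemma Ncomb_N (xi eta : gT R n k) : p_sub X xi -> p_sub X eta ->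
  NSt X (xi.1 *m Phi X eta - Phi X eta *m xi.2 - 2^-1 *: Phi X (gad xi eta)).
Proof.
move=> hxi heta.
have hV : TSt X (Phi X xi) by apply: Phi_T; case: hxi.
have hW : TSt X (Phi X eta) by apply: Phi_T; case: heta.
rewrite (p_pvec hxi) (p_pvec heta) Phi_pvec //.
move: (Phi X xi) (Phi X eta) hV hW => V W hV hW.
have -> : (pvec X V).1 *m W - W *m (pvec X V).2 - 2^-1 *: Phi X (gad (pvec X V) (pvec X W)) =
   X *m (- 2^-1 *: (V^T *m W + W^T *m V)).
  rewrite /pvec /Phi /gad /=.
  do 3! (mxnorm; rewrite ?XtXr ?XtX ?(Tswap_r _ hV) ?(Tswap hV) ?(Tswap_r _ hW) ?(Tswap hW)).
  lincomb.
apply: NX; trnorm; lincomb.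
Qed.

End Alg.

Lemma mulKassoc (R : realType) p q m (A : 'M[R]_(p, q)) (B : 'M[R]_(q, p)) (C : 'M[R]_(p, m)) :
  A *m B = 1%:M -> A *m (B *m C) = C.
Proof. by move=> h; rewrite mulmxA h mul1mx. Qed.

Section Transport.
Variable R : realType.
Variables n k : nat.
Variable X : 'M[R]_(n, k).
Variables (Q : 'M[R]_n) (Th : 'M[R]_k).
Hypothesis hQ : Q^T *m Q = 1%:M.
Hypothesis hT : Th^T *m Th = 1%:M.
Let hQ' : Q *m Q^T = 1%:M. Proof. exact: mulmx1C. Qed.
Let hT' : Th *m Th^T = 1%:M. Proof. exact: mulmx1C. Qed.
Let Y := Q *m X *m Th^T.

Ltac qnorm := do 3! (mxnorm; rewrite ?(mulKassoc _ hQ) ?(mulKassoc _ hT) ?(mulKassoc _ hQ') ?(mulKassoc _ hT') ?hQ ?hT ?hQ' ?hT' ?mulmx1).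

Lemma eucl_tr (A B : 'M[R]_(n, k)) : eucl (Q *m A *m Th^T) (Q *m B *m Th^T) = eucl A B.
Proof.
rewrite /eucl; trnorm; qnorm.
by rewrite mxtrace_mulC; qnorm. Qed.

Lemma TSt_tr V : TSt X V -> TSt Y (Q *m V *m Th^T).
Proof.
rewrite /TSt /Y /= => h; trnorm; qnorm.
have -> : Th *m (X^T *m (V *m Th^T)) + Th *m (V^T *m (X *m Th^T)) = Th *m ((X^T *m V + V^T *m X) *m Th^T).
  by mxnorm.
by rewrite h mul0mx mulmx0.
Qed.

Lemma back_forth (V : 'M[R]_(n, k)) : Q *m (Q^T *m V *m Th) *m Th^T = V.
Proof. by qnorm. Qed.

Lemma forth_back (V : 'M[R]_(n, k)) : Q^T *m (Q *m V *m Th^T) *m Th = V.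
Proof. by qnorm. Qed.

Lemma TSt_back V : TSt Y V -> TSt X (Q^T *m V *m Th).
Proof.
rewrite /TSt /Y /= => h.
have : Th^T *m ((Q *m X *m Th^T)^T *m V + V^T *m (Q *m X *m Th^T)) *m Th = 0.
  by rewrite h mulmx0 mul0mx.
trnorm; qnorm. move=> H. trnorm; qnorm. exact: H.
Qed.

Lemma NSt_tr W : NSt X W -> NSt Y (Q *m W *m Th^T).
Proof.
move=> h V hV; rewrite -(back_forth V) eucl_tr; apply: h; exact: TSt_back.
Qed.

Lemma Stiefel_tr : Stiefel X -> Stiefel Y.
Proof. rewrite /Stiefel /Y /= => h; trnorm; qnorm; rewrite (mulKassoc _ h); by qnorm. Qed.

End Transport.

Section Lin.
Variable R : realType.
Variables (U W : lmodType R) (f : U -> W).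
Hypothesis hf : forall c x y, f (c *: x + y) = c *: f x + f y.

Lemma lin0 : f 0 = 0.
Proof.
have h := hf 1 0 0; rewrite scaler0 addr0 scale1r in h.
by apply: (addrI (f 0)); rewrite addr0 -{1}h.
Qed.

Lemma linD x y : f (x + y) = f x + f y.
Proof. by have := hf 1 x y; rewrite !scale1r. Qed.

Lemma linZ c x : f (c *: x) = c *: f x.
Proof. by rewrite -[c *: x]addr0 hf lin0 addr0. Qed.

Lemma lin_big (J : Type) (r : seq J) (P : pred J) (F : J -> U) :
  f (\sum_(j <- r | P j) F j) = \sum_(j <- r | P j) f (F j).
Proof. exact: (big_morph f linD lin0). Qed.
End Lin.

Lemma lin_expand (R : realType) n k a b (f : 'M[R]_(n, k) -> 'M[R]_(a, b)) :
  (forall c x y, f (c *: x + y) = c *: f x + f y) ->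
  forall V, f V = \sum_i \sum_j V i j *: f (delta_mx i j).
Proof.
move=> hf V; rewrite {1}(matrix_sum_delta V) (lin_big hf).
apply: eq_bigr => i _; rewrite (lin_big hf); apply: eq_bigr => j _; exact: linZ.
Qed.

Lemma Deq (R : realType) (I : set R) f t d1 d2 : d1 = d2 -> has_deriv_in I f t d1 -> has_deriv_in I f t d2.
Proof. by move=> ->. Qed.

Lemma MDeq (R : realType) (I : set R) m p (F : R -> 'M[R]_(m, p)) t D1 D2 :
  D1 = D2 -> mx_deriv_in I F t D1 -> mx_deriv_in I F t D2.
Proof. by move=> ->. Qed.

Lemma MDfamily (R : realType) (I : set R) n k a b t (M : R -> 'M[R]_(n, k) -> 'M[R]_(a, b))
  (Z : R -> 'M[R]_(n, k)) DZ (DM : 'I_n -> 'I_k -> 'M[R]_(a, b)) :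
  I t -> (forall s, I s -> forall c x y, M s (c *: x + y) = c *: M s x + M s y) ->
  mx_deriv_in I Z t DZ ->
  (forall i j, mx_deriv_in I (fun s => M s (delta_mx i j)) t (DM i j)) ->
  mx_deriv_in I (fun s => M s (Z s)) t (M t DZ + \sum_i \sum_j Z t i j *: DM i j).
Proof.
move=> It hlin hZ hM.
apply: (MDloc (F := fun s => \sum_i \sum_j Z s i j *: M s (delta_mx i j))) => //.
  by move=> s Is; rewrite -(lin_expand (hlin s Is)).
move=> x y.
apply: (Dext (f := fun s => \sum_i \sum_j Z s i j * M s (delta_mx i j) x y)).
  by move=> s; rewrite summxE; apply: eq_bigr => i _; rewrite summxE; apply: eq_bigr => j _; rewrite mxE.
apply: Deq; last first.
  apply: Dsum => i; apply: Dsum => j; apply: Dmul; [exact: hZ | exact: hM].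
rewrite (lin_expand (hlin t It) DZ) mxE !summxE -big_split /=.
apply: eq_bigr => i _; rewrite !summxE -big_split /=; apply: eq_bigr => j _.
by rewrite !mxE.
Qed.


Section Gen.
Variable R : realType.
Variables n k : nat.

Lemma TSt0 (Y : 'M[R]_(n, k)) : TSt Y 0.
Proof. by rewrite /TSt /= mulmx0 trmx0 mul0mx addr0. Qed.

Lemma NSt0 (Y : 'M[R]_(n, k)) : NSt Y 0.
Proof. by move=> V _; rewrite /eucl mulmx0 mxtrace0 mulr0. Qed.

Lemma TSt_sub (Y V W : 'M[R]_(n, k)) : TSt Y V -> TSt Y W -> TSt Y (V - W).
Proof.
rewrite /TSt /= => hV hW.
by rewrite trB mulmxBr mulmxBl addrACA -opprD hV hW subrr.
Qed.

Lemma PT_lin (X : 'M[R]_(n, k)) c V W : PT X (c *: V + W) = c *: PT X V + PT X W.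
Proof. rewrite /PT /Pperp; trnorm; mxnorm; lincomb. Qed.

Lemma Pperp_lin (X : 'M[R]_(n, k)) c V W : Pperp X (c *: V + W) = c *: Pperp X V + Pperp X W.
Proof. rewrite /Pperp; trnorm; mxnorm; lincomb. Qed.

Lemma Pperp0 (X : 'M[R]_(n, k)) : Pperp X 0 = 0.
Proof. by rewrite /Pperp mulmx0 trmx0 mul0mx addr0 mulmx0 scaler0. Qed.

Lemma T_closed (I : set R) (X : 'M[R]_(n, k)) (Z : R -> 'M[R]_(n, k)) t D :
  I t -> ~ Fw I t set0 -> (forall s, I s -> TSt X (Z s)) -> mx_deriv_in I Z t D -> TSt X D.
Proof.
move=> It nd hZ hD.
have h := MDadd (MDmul (MDcst I t X^T) hD) (MDmul (MDtr hD) (MDcst I t X)).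
have := MDzero It nd _ h.
rewrite mul0mx mulmx0 add0r addr0; apply => s Is; exact: hZ.
Qed.

Lemma N_closed (I : set R) (X : 'M[R]_(n, k)) (Z : R -> 'M[R]_(n, k)) t D :
  X^T *m X = 1%:M ->
  I t -> ~ Fw I t set0 -> (forall s, I s -> NSt X (Z s)) -> mx_deriv_in I Z t D -> NSt X D.
Proof.
move=> XtX It nd hZ hD.
have h := MDsub hD (MDscale (c := 2^-1) (MDmul (MDcst I t X)
   (MDadd (MDmul (MDcst I t X^T) hD) (MDmul (MDtr hD) (MDcst I t X))))).
have := MDzero It nd _ h.
rewrite mul0mx mulmx0 add0r addr0 mul0mx add0r => H.
have e : PT X D = 0.
  apply: H => s Is; exact: (N_PT XtX (hZ s Is)).
have <- : Pperp X D = D by move: e; rewrite /PT => /eqP; rewrite subr_eq0 => /eqP.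
exact: Pperp_N.
Qed.

End Gen.


Section Main.
Variable R : realType.
Variables n k : nat.
Variable I : set R.
Variable X : 'M[R]_(n, k).
Hypothesis XtX : X^T *m X = 1%:M.
Variables (beta dbeta : R -> 'M[R]_(n, k)).
Hypothesis hbeta : forall t, I t -> TSt X (beta t).
Hypothesis hdbeta : forall t, I t -> mx_deriv_in I beta t (dbeta t).
Variable S : R -> gT R n k -> gT R n k.
Variables (Rq : R -> 'M[R]_n) (th : R -> 'M[R]_k) (T : R -> 'M[R]_(n, k) -> 'M[R]_(n, k)).
Definition u_ t := pvec X (dbeta t).
Definition xi_ t := S t (u_ t).
Hypothesis hSO : forall t, I t -> Op X (S t).
Hypothesis hSd : forall t w, I t -> p_sub X w ->
     g_deriv_in I (fun s => S s w) t
       (gscale (- 2^-1) (prp X (gad (S t (u_ t)) (S t w)))).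
Hypothesis hq : forall t, I t -> orthmx (Rq t) /\ orthmx (th t).
Hypothesis hRd : forall t, I t -> mx_deriv_in I Rq t (Rq t *m (xi_ t).1).
Hypothesis hthd : forall t, I t -> mx_deriv_in I th t (th t *m (xi_ t).2).
Hypothesis hTiso : forall t, I t -> lin_isom (NSt X) (NSt X) (T t).
Hypothesis hTd : forall t W, I t -> NSt X W ->
     mx_deriv_in I (fun s => T s W) t (- Pperp X (fxi (xi_ t) (T t W))).

Definition betah_ t := Rq t *m X *m (th t)^T.
Definition B_ t (V : 'M[R]_(n, k)) :=
    let eta := S t (pvec X V) in
    Rq t *m (eta.1 *m X - X *m eta.2) *m (th t)^T.
Definition C_ t (W : 'M[R]_(n, k)) := Rq t *m T t W *m (th t)^T.

Lemma S_p t x : I t -> p_sub X x -> p_sub X (S t x).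
Proof. by move=> It; case: (hSO It) => h _ _; apply: h. Qed.

Lemma S_lin t c x y : I t -> p_sub X x -> p_sub X y ->
  S t (gadd (gscale c x) y) = gadd (gscale c (S t x)) (S t y).
Proof. by move=> It; case: (hSO It) => _ h _; apply: h. Qed.

Lemma S_isom t x y : I t -> p_sub X x -> p_sub X y -> ginner (S t x) (S t y) = ginner x y.
Proof. by move=> It; case: (hSO It) => _ _ h; apply: h. Qed.

Lemma isoB t V W : I t -> TSt X V -> TSt X W ->
  eucl (Phi X (S t (pvec X V))) (Phi X (S t (pvec X W))) = eucl V W.
Proof.
move=> It hV hW.
have pa := S_p It (p_pvec_in hV).
have pb := S_p It (p_pvec_in hW).
have ga : g_sub (S t (pvec X V)) by case: pa.
have gb : g_sub (S t (pvec X W)) by case: pb.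
rewrite -(eucl_ginner XtX (Phi_T XtX ga) (Phi_T XtX gb)).
rewrite -(p_pvec XtX pa) -(p_pvec XtX pb) S_isom //; try exact: p_pvec_in.
exact: eucl_ginner.
Qed.

Definition J t V := S t (pvec X (PT X V)).

Lemma J_p t V : I t -> p_sub X (J t V).
Proof. by move=> It; apply: S_p => //; apply: p_pvec_in => //; exact: PT_T. Qed.

Lemma J_lin t c V W : I t -> J t (c *: V + W) = gadd (gscale c (J t V)) (J t W).
Proof.
move=> It; rewrite /J PT_lin (pvec_lin X) S_lin //; apply: p_pvec_in => //; exact: PT_T.
Qed.

Lemma orth t : I t -> (Rq t)^T *m Rq t = 1%:M /\ (th t)^T *m th t = 1%:M.
Proof. by move=> It; case: (hq It). Qed.


Definition M_B t V := Rq t *m Phi X (J t V) *m (th t)^T.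

Lemma M_B_lin t c V W : I t -> M_B t (c *: V + W) = c *: M_B t V + M_B t W.
Proof.
move=> It; rewrite /M_B J_lin // Phi_lin.
by rewrite mulmxDr mulmxDl -scalemxAr -scalemxAl.
Qed.

Lemma B_eq t V : TSt X V -> B_ t V = M_B t V.
Proof. by move=> hV; rewrite /M_B /J T_PT. Qed.

Definition Dg t x := gscale (- 2^-1) (prp X (gad (xi_ t) x)).
Definition EB t x := (Rq t *m (xi_ t).1 *m Phi X x + Rq t *m Phi X (Dg t x)) *m (th t)^T
   + Rq t *m Phi X x *m (th t *m (xi_ t).2)^T.

Lemma deriv_Sw t w : I t -> p_sub X w ->
  mx_deriv_in I (fun s => Rq s *m Phi X (S s w) *m (th s)^T) t (EB t (S t w)).
Proof.
move=> It hw.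
have [h1 h2] := hSd It hw.
have hP : mx_deriv_in I (fun s => Phi X (S s w)) t (Phi X (Dg t (S t w))).
  apply: (MDeq _ (MDsub (MDmul h1 (MDcst I t X)) (MDmul (MDcst I t X) h2))).
  by rewrite /Phi mulmx0 mul0mx addr0 add0r.
exact: (MDmul (MDmul (hRd It) hP) (MDtr (hthd It))).
Qed.

Lemma EB_lin t c x y : EB t (gadd (gscale c x) y) = c *: EB t x + EB t y.
Proof.
rewrite /EB /Dg !Phi_scale !(Phi_prp XtX) !gad_lin !Phi_lin.
move: (Phi X x) (Phi X y) (Phi X (gad (xi_ t) x)) (Phi X (gad (xi_ t) y)) => a b c' d.
move: (xi_ t).1 (xi_ t).2 (Rq t) (th t) => x1 x2 Q Th.
mxnorm; lincomb.
Qed.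

Lemma KeyB t Z DZ : I t -> (forall s, I s -> TSt X (Z s)) -> mx_deriv_in I Z t DZ ->
  mx_deriv_in I (fun s => B_ s (Z s)) t (EB t (J t (Z t)) + Rq t *m Phi X (J t DZ) *m (th t)^T).
Proof.
move=> It hZT hZ.
apply: (MDloc (F := fun s => M_B s (Z s))) => //.
  by move=> s Is; rewrite B_eq //; apply: hZT.
apply: MDeq; last first.
  apply: (MDfamily (DM := fun i j => EB t (J t (delta_mx i j))) It _ hZ _).
    by move=> s Is c x y; exact: M_B_lin.
  move=> i j; apply: (deriv_Sw It); apply: p_pvec_in; exact: PT_T.
rewrite addrC (lin_expand (f := fun V => EB t (J t V))) //.
by move=> c x y; rewrite J_lin // EB_lin.
Qed.


Lemma skew2 (x : gT R n k) : p_sub X x -> (x.2)^T = - x.2.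
Proof. by case=> [[_ h] _]. Qed.

Lemma EB_N t eta : I t -> p_sub X (xi_ t) -> p_sub X eta -> NSt (betah_ t) (EB t eta).
Proof.
move=> It hxi heta.
have [hQ hT] := orth It.
have e : EB t eta = Rq t *m (((xi_ t).1 *m Phi X eta - Phi X eta *m (xi_ t).2 -
    2^-1 *: Phi X (gad (xi_ t) eta))) *m (th t)^T.
  rewrite /EB /Dg Phi_scale (Phi_prp XtX) trmx_mul (skew2 hxi).
  move: (Phi X eta) (Phi X (gad (xi_ t) eta)) => a b.
  move: (xi_ t).1 (xi_ t).2 (Rq t) (th t) => x1 x2 Q Th.
  mxnorm; lincomb.
rewrite e /betah_; apply: (NSt_tr hQ hT); exact: Ncomb_N.
Qed.

Definition M_C t V := Rq t *m T t (Pperp X V) *m (th t)^T.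

Lemma T_lin t c V W : I t -> NSt X V -> NSt X W -> T t (c *: V + W) = c *: T t V + T t W.
Proof. by move=> It; case: (hTiso It) => _ h _; apply: h. Qed.

Lemma T_N t V : I t -> NSt X V -> NSt X (T t V).
Proof. by move=> It; case: (hTiso It) => h _ _; apply: h. Qed.

Lemma T_isom t V W : I t -> NSt X V -> NSt X W -> eucl (T t V) (T t W) = eucl V W.
Proof. by move=> It; case: (hTiso It) => _ _ h; apply: h. Qed.

Lemma M_C_lin t c V W : I t -> M_C t (c *: V + W) = c *: M_C t V + M_C t W.
Proof.
move=> It; rewrite /M_C Pperp_lin T_lin //; try exact: Pperp_N.
by rewrite mulmxDr mulmxDl -scalemxAr -scalemxAl.
Qed.

Lemma C_eq t W : NSt X W -> C_ t W = M_C t W.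
Proof. by move=> hW; rewrite /M_C N_Pperp. Qed.

Definition EC t (A : 'M[R]_(n, k)) := (Rq t *m (xi_ t).1 *m A + Rq t *m - Pperp X (fxi (xi_ t) A)) *m (th t)^T
   + Rq t *m A *m (th t *m (xi_ t).2)^T.

Lemma EC_lin t c A B : EC t (c *: A + B) = c *: EC t A + EC t B.
Proof.
have fl : fxi (xi_ t) (c *: A + B) = c *: fxi (xi_ t) A + fxi (xi_ t) B.
  by rewrite /fxi; move: (xi_ t).1 (xi_ t).2 => x1 x2; mxnorm; lincomb.
rewrite /EC fl Pperp_lin.
move: (Pperp X (fxi (xi_ t) A)) (Pperp X (fxi (xi_ t) B)) => PA PB.
move: (xi_ t).1 (xi_ t).2 (Rq t) (th t) => x1 x2 Q Th.
trnorm; mxnorm; lincomb.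
Qed.

Lemma deriv_TA t A0 : I t -> NSt X A0 ->
  mx_deriv_in I (fun s => Rq s *m T s A0 *m (th s)^T) t (EC t (T t A0)).
Proof.
move=> It hA.
exact: (MDmul (MDmul (hRd It) (hTd It hA)) (MDtr (hthd It))).
Qed.

Lemma KeyC t Z DZ : I t -> (forall s, I s -> NSt X (Z s)) -> mx_deriv_in I Z t DZ ->
  mx_deriv_in I (fun s => C_ s (Z s)) t (EC t (T t (Pperp X (Z t))) + Rq t *m T t (Pperp X DZ) *m (th t)^T).
Proof.
move=> It hZN hZ.
apply: (MDloc (F := fun s => M_C s (Z s))) => //.
  by move=> s Is; rewrite C_eq //; apply: hZN.
apply: MDeq; last first.
  apply: (MDfamily (DM := fun i j => EC t (T t (Pperp X (delta_mx i j)))) It _ hZ _).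
    by move=> s Is c x y; exact: M_C_lin.
  move=> i j; apply: (deriv_TA It); exact: Pperp_N.
rewrite addrC (lin_expand (f := fun V => EC t (T t (Pperp X V)))) //.
move=> c x y; rewrite Pperp_lin T_lin //; try exact: Pperp_N.
exact: EC_lin.
Qed.

Lemma EC_T t A : I t -> p_sub X (xi_ t) -> TSt (betah_ t) (EC t A).
Proof.
move=> It hxi.
have [hQ hT] := orth It.
have e : EC t A = Rq t *m PT X (fxi (xi_ t) A) *m (th t)^T.
  rewrite /EC /PT /fxi trmx_mul (skew2 hxi).
  move: (Pperp X ((xi_ t).1 *m A - A *m (xi_ t).2)) => P.
  move: (xi_ t).1 (xi_ t).2 (Rq t) (th t) => x1 x2 Q Th.
  mxnorm; lincomb.
rewrite e /betah_; apply: (TSt_tr _ hQ); exact: PT_T.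
Qed.


Lemma TSt_lin (Y V W : 'M[R]_(n, k)) c : TSt Y V -> TSt Y W -> TSt Y (c *: V + W).
Proof.
rewrite /TSt /= => hV hW.
rewrite trD trZ mulmxDr mulmxDl -scalemxAr -scalemxAl addrACA -scalerDr hV hW.
by rewrite scaler0 addr0.
Qed.

Lemma B_T t V : I t -> TSt X V -> TSt (betah_ t) (B_ t V).
Proof.
move=> It hV; have [hQ hT] := orth It.
have g : g_sub (S t (pvec X V)) by case: (S_p It (p_pvec_in hV)).
exact: (TSt_tr (th t) hQ (Phi_T XtX g)).
Qed.

Lemma C_N t W : I t -> NSt X W -> NSt (betah_ t) (C_ t W).
Proof.
move=> It hW; have [hQ hT] := orth It.
exact: (NSt_tr hQ hT (T_N It hW)).
Qed.

Lemma PhiS0 t : I t -> Phi X (S t (pvec X 0)) = 0.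
Proof.
move=> It; apply: eucl_pos; rewrite (isoB It (@TSt0 _ _ _ X) (@TSt0 _ _ _ X)).
by rewrite /eucl mulmx0 mxtrace0 mulr0.
Qed.

Lemma T0 t : I t -> T t 0 = 0.
Proof.
move=> It; apply: eucl_pos; rewrite (T_isom It (@NSt0 _ _ _ X) (@NSt0 _ _ _ X)).
by rewrite /eucl mulmx0 mxtrace0 mulr0.
Qed.


Lemma part_isoB t : I t -> lin_isom (TSt X) (TSt (betah_ t)) (B_ t).
Proof.
move=> It; have [hQ hT] := orth It; split.
- by move=> V hV; exact: B_T.
- move=> a V W hV hW; rewrite !B_eq //; last exact: TSt_lin.
  exact: M_B_lin.
- move=> V W hV hW.
  rewrite /B_ /=.
  rewrite (eucl_tr hQ hT).
  exact: isoB.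
Qed.

Lemma part_isoC t : I t -> lin_isom (NSt X) (NSt (betah_ t)) (C_ t).
Proof.
move=> It; have [hQ hT] := orth It; split.
- by move=> W hW; exact: C_N.
- move=> a V W hV hW; rewrite /C_ T_lin //.
  by rewrite mulmxDr mulmxDl -scalemxAr -scalemxAl.
- move=> V W hV hW; rewrite /C_ (eucl_tr hQ hT); exact: T_isom.
Qed.

Lemma part_deriv t : I t -> mx_deriv_in I betah_ t (B_ t (dbeta t)).
Proof.
move=> It.
case: (pselect (Fw I t set0)) => [dg|nd]; first exact: MDdeg.
have hdT : TSt X (dbeta t) := T_closed It nd hbeta (hdbeta It).
have hxi : p_sub X (xi_ t) := S_p It (p_pvec_in hdT).
apply: (MDeq _ (MDmul (MDmul (hRd It) (MDcst I t X)) (MDtr (hthd It)))).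
have -> : B_ t (dbeta t) = Rq t *m ((xi_ t).1 *m X - X *m (xi_ t).2) *m (th t)^T by [].
rewrite trmx_mul (skew2 hxi).
move: (xi_ t).1 (xi_ t).2 (Rq t) (th t) => x1 x2 Q Th.
mxnorm; lincomb.
Qed.


Lemma part_tpar (Z : R -> 'M[R]_(n, k)) :
  (forall t, I t -> TSt X (Z t)) -> mx_differentiable_in I Z ->
  (tparallel I (@TSt R n k) (@NSt R n k) betah_ (fun t => B_ t (Z t)) <->
   tparallel I (fun _ => TSt X) (fun _ => NSt X) beta Z).
Proof.
move=> hZT [DZ hDZ]; split.
- move=> [_ [D2 [hD2 hD2N]]]; split; first exact: hZT.
  have : forall t, exists d, I t -> mx_deriv_in I Z t d /\ NSt X d.
    move=> t; case: (pselect (I t)) => It; last by exists 0.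
    case: (pselect (Fw I t set0)) => [dg|nd].
      by exists 0 => _; split; [exact: MDdeg | exact: NSt0].
    exists (DZ t) => _; split; first exact: hDZ.
    have [hQ hT] := orth It.
    have hdT := T_closed It nd hbeta (hdbeta It).
    have hxi : p_sub X (xi_ t) := S_p It (p_pvec_in hdT).
    have hZt : TSt X (DZ t) := T_closed It nd hZT (hDZ t It).
    have e := MDuniq nd (hD2 t It) (KeyB It hZT (hDZ t It)).
    set K := Rq t *m Phi X (J t (DZ t)) *m (th t)^T in e.
    have KN : NSt (betah_ t) K.
      have -> : K = D2 t - EB t (J t (Z t)) by rewrite e addrC addKr.
      apply: NSt_sub; first exact: hD2N.
      apply: EB_N => //; exact: J_p.
    have KT : TSt (betah_ t) K.
      have g : g_sub (J t (DZ t)) by case: (J_p (DZ t) It).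
      exact: (TSt_tr (th t) hQ (Phi_T XtX g)).
    have K0 := TN0 KT KN.
    have P0 : Phi X (J t (DZ t)) = 0.
      by rewrite -(forth_back hQ hT (Phi X (J t (DZ t)))) -/K K0 mulmx0 mul0mx.
    have : eucl (DZ t) (DZ t) = 0.
      rewrite -(isoB It hZt hZt).
      have -> : Phi X (S t (pvec X (DZ t))) = 0 by rewrite -{1}(T_PT hZt).
      by rewrite /eucl mulmx0 mxtrace0 mulr0.
    move/eucl_pos => ->; exact: NSt0.
  case/choice => D hD; exists D; split => t It; by case: (hD t It).
- move=> [_ [D [hD hDN]]]; split; first by move=> t It; apply: B_T => //; exact: hZT.
  have : forall t, exists d, I t -> mx_deriv_in I (fun s => B_ s (Z s)) t d /\ NSt (betah_ t) d.
    move=> t; case: (pselect (I t)) => It; last by exists 0.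
    case: (pselect (Fw I t set0)) => [dg|nd].
      by exists 0 => _; split; [exact: MDdeg | exact: NSt0].
    have hdT := T_closed It nd hbeta (hdbeta It).
    have hxi : p_sub X (xi_ t) := S_p It (p_pvec_in hdT).
    exists (EB t (J t (Z t)) + Rq t *m Phi X (J t (D t)) *m (th t)^T) => _.
    split; first exact: (KeyB It hZT (hD t It)).
    have -> : Phi X (J t (D t)) = 0 by rewrite /J (N_PT XtX (hDN t It)) PhiS0.
    rewrite mulmx0 mul0mx addr0.
    apply: EB_N => //; exact: J_p.
  case/choice => D2 hD2; exists D2; split => t It; by case: (hD2 t It).
Qed.

Lemma part_npar (Z : R -> 'M[R]_(n, k)) :
  (forall t, I t -> NSt X (Z t)) -> mx_differentiable_in I Z ->
  (nparallel I (@TSt R n k) (@NSt R n k) betah_ (fun t => C_ t (Z t)) <->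
   nparallel I (fun _ => TSt X) (fun _ => NSt X) beta Z).
Proof.
move=> hZN [DZ hDZ]; split.
- move=> [_ [D2 [hD2 hD2T]]]; split; first exact: hZN.
  have : forall t, exists d, I t -> mx_deriv_in I Z t d /\ TSt X d.
    move=> t; case: (pselect (I t)) => It; last by exists 0.
    case: (pselect (Fw I t set0)) => [dg|nd].
      by exists 0 => _; split; [exact: MDdeg | exact: TSt0].
    exists (DZ t) => _; split; first exact: hDZ.
    have [hQ hT] := orth It.
    have hdT := T_closed It nd hbeta (hdbeta It).
    have hxi : p_sub X (xi_ t) := S_p It (p_pvec_in hdT).
    have hZt : NSt X (DZ t) := N_closed XtX It nd hZN (hDZ t It).
    have e := MDuniq nd (hD2 t It) (KeyC It hZN (hDZ t It)).
    rewrite (N_Pperp XtX hZt) in e.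
    set K := Rq t *m T t (DZ t) *m (th t)^T in e.
    have KT : TSt (betah_ t) K.
      have -> : K = D2 t - EC t (T t (Pperp X (Z t))) by rewrite e addrC addKr.
      apply: TSt_sub; first exact: hD2T.
      exact: EC_T.
    have KN : NSt (betah_ t) K by exact: (NSt_tr hQ hT (T_N It hZt)).
    have K0 := TN0 KT KN.
    have P0 : T t (DZ t) = 0.
      by rewrite -(forth_back hQ hT (T t (DZ t))) -/K K0 mulmx0 mul0mx.
    have : eucl (DZ t) (DZ t) = 0.
      rewrite -(T_isom It hZt hZt) P0.
      by rewrite /eucl mulmx0 mxtrace0 mulr0.
    move/eucl_pos => ->; exact: TSt0.
  case/choice => D hD; exists D; split => t It; by case: (hD t It).
- move=> [_ [D [hD hDT]]]; split; first by move=> t It; apply: C_N => //; exact: hZN.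
  have : forall t, exists d, I t -> mx_deriv_in I (fun s => C_ s (Z s)) t d /\ TSt (betah_ t) d.
    move=> t; case: (pselect (I t)) => It; last by exists 0.
    case: (pselect (Fw I t set0)) => [dg|nd].
      by exists 0 => _; split; [exact: MDdeg | exact: TSt0].
    have hdT := T_closed It nd hbeta (hdbeta It).
    have hxi : p_sub X (xi_ t) := S_p It (p_pvec_in hdT).
    exists (EC t (T t (Pperp X (Z t))) + Rq t *m T t (Pperp X (D t)) *m (th t)^T) => _.
    split; first exact: (KeyC It hZN (hD t It)).
    rewrite (T_Pperp (hDT t It)) (T0 It) mulmx0 mul0mx addr0.
    exact: EC_T.
  case/choice => D2 hD2; exists D2; split => t It; by case: (hD2 t It).
Qed.

Lemma mainE : extrinsic_rolling I (TSt X) (fun _ => TSt X) (fun _ => NSt X)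
    (@Stiefel R n k) (@TSt R n k) (@NSt R n k) beta betah_ B_ C_.
Proof.
split.
- split; [|split].
  + move=> t It; split; first exact: hbeta.
    have [hQ hT] := orth It; exact: (Stiefel_tr hQ hT XtX).
  + exact: part_isoB.
  + exact: part_isoC.
- exists dbeta, (fun t => B_ t (dbeta t)); split => //.
  exact: part_deriv.
- exact: part_tpar.
- exact: part_npar.
Qed.

End Main.


Unset Implicit Arguments.

Theorem theorem5p10 (R : realType) (n k : nat) (hkn : (1 <= k <= n)%N)
  (I : set R) (hI : is_interval I) (hI0 : I 0)
  (X : 'M[R]_(n, k)) (hX : Stiefel X)
  (beta dbeta : R -> 'M[R]_(n, k))
  (hbeta : forall t, I t -> TSt X (beta t))
  (hdbeta : forall t, I t -> mx_deriv_in I beta t (dbeta t))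
  (S : R -> gT R n k -> gT R n k)
  (Rq : R -> 'M[R]_n) (th : R -> 'M[R]_k)
  (T : R -> 'M[R]_(n, k) -> 'M[R]_(n, k)) :
  let u := fun t => pvec X (dbeta t) in
  let xi := fun t => S t (u t) in
  (* S : I -> O(p) solves dS = -1/2 pr_p o ad_{S u} o S, S(0) = id *)
  (forall t, I t -> Op X (S t)) ->
  (forall w, p_sub X w -> S 0 w = w) ->
  (forall t w, I t -> p_sub X w ->
     g_deriv_in I (fun s => S s w) t
       (gscale (- 2^-1) (prp X (gad (S t (u t)) (S t w))))) ->
  (* q = (R, theta) : I -> O(n) x O(k) *)
  (forall t, I t -> orthmx (Rq t) /\ orthmx (th t)) ->
  Rq 0 = 1%:M -> th 0 = 1%:M ->
  (forall t, I t -> mx_deriv_in I Rq t (Rq t *m (xi t).1)) ->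
  (forall t, I t -> mx_deriv_in I th t (th t *m (xi t).2)) ->
  (* T : I -> O(N_X St) solves dT = - P_X^perp o f_xi o T, T(0) = id *)
  (forall t, I t -> lin_isom (NSt X) (NSt X) (T t)) ->
  (forall W, NSt X W -> T 0 W = W) ->
  (forall t W, I t -> NSt X W ->
     mx_deriv_in I (fun s => T s W) t (- Pperp X (fxi (xi t) (T t W)))) ->
  let betah := fun t => Rq t *m X *m (th t)^T in
  let B := fun t (V : 'M[R]_(n, k)) =>
    let eta := S t (pvec X V) in
    Rq t *m (eta.1 *m X - X *m eta.2) *m (th t)^T in
  let C := fun t (W : 'M[R]_(n, k)) => Rq t *m T t W *m (th t)^T in
  extrinsic_rolling I
    (TSt X) (fun _ => TSt X) (fun _ => NSt X)
    (@Stiefel R n k) (@TSt R n k) (@NSt R n k)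
    beta betah B C.

Proof.
move=> u xi hSO hS0 hSd hq hR0 hth0 hRd hthd hTiso hT0 hTd betah B C.
exact: (@mainE R n k I X hX beta dbeta hbeta hdbeta S Rq th T hSO hSd hq hRd hthd hTiso hTd).
Qed.
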